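(* Let $(X,x)$ be a pointed diffeological space and let $A$ be a $D$-open neighbourhood of $x$ in $X$, equipped with the sub-diffeology of $X$. Then the inclusion map $A\hookrightarrow X$ induces an isomorphism $T_x(A)\cong T_x(X)$.
   Context: A diffeological space is a set $X$ together with, for every open subset $U$ of every $\mathbb{R}^n$, a set of functions $U\to X$ called plots, such that constant maps are plots, the composite of a plot with a smooth map between open subsets of Euclidean spaces is a plot, and a function which is locally a plot is a plot; smooth maps send plots to plots. The $D$-topology on $X$ is the final topology with respect to all plots; a subset is $D$-open if its preimage under every plot is open. The sub-diffeology on $A\subseteq X$ consists of all maps $U\to A$ whose composite with the inclusion is a plot of $X$. The internal tangent space $T_x(X)$ is the colimit in the category of real vector spaces of the functor on the category whose objects are plots $p:U\to X$ with $U$ a connected open neighbourhood of $0$ in some $\mathbb{R}^n$ and $p(0)=x$, and whose morphisms $p\to q$ (for $q:V\to X$) are smooth maps $f:U\to V$ with $f(0)=0$ and $q\circ f=p$, sending $p$ to $T_0(U)$ and $f$ to $f_*:T_0(U)\to T_0(V)$. Smooth pointed maps induce linear maps between internal tangent spaces. *)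

(* Defs.v *)
From HB Require Import structures.
From mathcomp Require Import all_boot all_order all_algebra.
From mathcomp Require Import all_classical all_reals all_analysis.
Set Implicit Arguments. Unset Strict Implicit. Unset Printing Implicit Defensive.
Import Order.TTheory GRing.Theory Num.Theory.
Import numFieldNormedType.Exports.
Local Open Scope classical_set_scope.
Local Open Scope ring_scope.

Section Diffeology.
Variable R : realType.

Definition ebasis (n : nat) (i : 'I_n) : 'rV[R]_n := delta_mx 0 i.

Fixpoint iterD (n m : nat) (l : seq 'I_n) (f : 'rV[R]_n -> 'rV[R]_m)
  : 'rV[R]_n -> 'rV[R]_m :=
  match l with
  | [::] => f
  | i :: l' => fun a => derive (iterD l' f) a (ebasis i)
  end.

Definition smooth_on (n m : nat) (U : set 'rV[R]_n) (f : 'rV[R]_n -> 'rV[R]_m) : Prop :=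
  forall l : seq 'I_n,
    (forall a, U a -> {for a, continuous (iterD l f)}) /\
    (forall (i : 'I_n) a, U a -> derivable (iterD l f) a (ebasis i)).

(* A diffeology on X: plot n U p means p restricted to the open U ⊆ R^n is a plot *)
Record diffeology (X : Type) := Diffeology {
  plot : forall n : nat, set 'rV[R]_n -> ('rV[R]_n -> X) -> Prop;
  plot_open : forall n U p, @plot n U p -> open U;
  plot_ext : forall n U (p q : 'rV[R]_n -> X), plot U p ->
      (forall u, U u -> p u = q u) -> plot U q;
  plot_const : forall n (U : set 'rV[R]_n) (x : X), open U -> plot U (fun _ => x);
  plot_comp : forall n m (U : set 'rV[R]_n) (V : set 'rV[R]_m) p
      (f : 'rV[R]_m -> 'rV[R]_n),
      plot U p -> open V -> smooth_on V f -> (forall v, V v -> U (f v)) ->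
      plot V (p \o f);
  plot_local : forall n (U : set 'rV[R]_n) p, open U ->
      (forall u, U u -> exists W : set 'rV[R]_n,
          [/\ open W, W u, W `<=` U & plot W p]) -> plot U p
}.

Definition D_open (X : Type) (D : diffeology X) (A : set X) : Prop :=
  forall n (U : set 'rV[R]_n) p, plot D U p -> open (U `&` p @^-1` A).

Section Sub.
Variables (X : Type) (D : diffeology X) (A : set X).
Definition sub_plot n (U : set 'rV[R]_n) (p : 'rV[R]_n -> {y : X | A y}) : Prop :=
  plot D U (fun u => proj1_sig (p u)).

Lemma sub_plot_open n U p : @sub_plot n U p -> open U.
Proof. exact: plot_open. Qed.
Lemma sub_plot_ext n U (p q : 'rV[R]_n -> {y : X | A y}) :
  sub_plot U p -> (forall u, U u -> p u = q u) -> sub_plot U q.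
Proof. by move=> h e; apply: (plot_ext h) => u /e ->. Qed.
Lemma sub_plot_const n (U : set 'rV[R]_n) x : open U -> sub_plot U (fun _ => x).
Proof. exact: plot_const. Qed.
Lemma sub_plot_comp n m (U : set 'rV[R]_n) (V : set 'rV[R]_m) p f :
  sub_plot U p -> open V -> smooth_on V f -> (forall v, V v -> U (f v)) ->
  sub_plot V (p \o f).
Proof. by move=> h oV sf fV; apply: (plot_comp h oV sf fV). Qed.
Lemma sub_plot_local n (U : set 'rV[R]_n) p : open U ->
  (forall u, U u -> exists W : set 'rV[R]_n, [/\ open W, W u, W `<=` U & sub_plot W p]) ->
  sub_plot U p.
Proof. by move=> oU h; apply: plot_local. Qed.

Definition sub_diffeology : diffeology {y : X | A y} :=
  Diffeology sub_plot_open sub_plot_ext sub_plot_const sub_plot_comp sub_plot_local.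
End Sub.

Section Tangent.
Variables (X : Type) (D : diffeology X) (x : X).

Definition tobj n (U : set 'rV[R]_n) (p : 'rV[R]_n -> X) : Prop :=
  [/\ open U, connected U, U 0, plot D U p & p 0 = x].

Definition tmor n m (U : set 'rV[R]_n) (p : 'rV[R]_n -> X)
    (V : set 'rV[R]_m) (q : 'rV[R]_m -> X) (f : 'rV[R]_n -> 'rV[R]_m) : Prop :=
  [/\ smooth_on U f, (forall u, U u -> V (f u)), f 0 = 0
    & forall u, U u -> q (f u) = p u].

Definition is_linear (V W : lmodType R) (h : V -> W) : Prop :=
  forall (a : R) (u v : V), h (a *: u + v) = a *: h u + h v.

(* a cocone of the functor p |-> T_0(U) = R^n, f |-> f_* = d f(0) *)
Definition tcocone (W : lmodType R)
    (c : forall n, set 'rV[R]_n -> ('rV[R]_n -> X) -> 'rV[R]_n -> W) : Prop :=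
  (forall n U p, @tobj n U p -> is_linear (c n U p)) /\
  (forall n m U p V q f, @tobj n U p -> @tobj m V q -> tmor U p V q f ->
     forall v : 'rV[R]_n, c m V q (derive f 0 v) = c n U p v).

(* (T, c) is a colimit of this diagram, i.e. T is (a model of) T_x(X) *)
Definition is_tangent_space (T : lmodType R)
    (c : forall n, set 'rV[R]_n -> ('rV[R]_n -> X) -> 'rV[R]_n -> T) : Prop :=
  tcocone c /\
  forall (W : lmodType R) d, tcocone d ->
    exists! h : T -> W, is_linear h /\
      forall n U p, @tobj n U p -> forall v, h (c n U p v) = d n U p v.
End Tangent.
End Diffeology.

(* Main.v *)
Require Import Defs.
From HB Require Import structures.
From mathcomp Require Import all_boot all_order all_algebra.
From mathcomp Require Import all_classical all_reals all_analysis.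
Set Implicit Arguments. Unset Strict Implicit. Unset Printing Implicit Defensive.
Import Order.TTheory GRing.Theory Num.Theory.
Import numFieldNormedType.Exports.
Local Open Scope classical_set_scope.
Local Open Scope ring_scope.

Lemma ball_connected (R : realType) n (r : R) : connected (ball (0 : 'rV[R]_n) r).
Proof.
have -> : ball (0 : 'rV[R]_n) r =
  \bigcup_(y in ball (0 : 'rV[R]_n) r) ((fun t : R => t *: y) @` `[0, 1]%classic).
  apply/seteqP; split => z.
    move=> hz; exists z => //; exists 1; last by rewrite scale1r.
    by rewrite /= in_itv /= ler01 lexx.
  move=> [y hy [t ht <-]].
  move: hy; rewrite -ball_normE /ball_ /= !sub0r !normrN normrZ => hy.
  move: ht; rewrite /= in_itv /= => /andP[t0 t1].
  rewrite ger0_norm //; apply: le_lt_trans hy.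
  by rewrite -[leRHS]mul1r ler_wpM2r.
apply: bigcup_connected.
  exists 0 => y _; exists 0; last by rewrite scale0r.
  by rewrite /= in_itv /= lexx ler01.
move=> y _; apply: connected_continuous_connected; first exact: segment_connected.
apply: continuous_subspaceT => t; exact: scalel_continuous.
Qed.

Lemma iterD_id (R : realType) n (l : seq 'I_n) :
  (Defs.iterD l (@id 'rV[R]_n) = id) \/ exists c, Defs.iterD l (@id 'rV[R]_n) = cst c.
Proof.
elim: l => [|i l [IH|[c IH]]] /=; first by left.
  right; exists (ebasis R i); apply: funext => a; rewrite IH; exact: derive_id.
right; exists 0; apply: funext => a; rewrite IH; exact: derive_cst.
Qed.

Lemma smooth_on_id (R : realType) n (U : set 'rV[R]_n) : smooth_on U id.
Proof.
move=> l; have [->|[c ->]] := iterD_id R l; split.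
- by move=> a _; exact: cvg_id.
- by move=> i a _; exact: derivable_id.
- by move=> a _; apply: cst_continuous.
- by move=> i a _; exact: derivable_cst.
Qed.

Lemma smooth_on_sub (R : realType) n m (U B : set 'rV[R]_n) (f : 'rV[R]_n -> 'rV[R]_m) :
  smooth_on U f -> B `<=` U -> smooth_on B f.
Proof.
move=> sf BU l; have [h1 h2] := sf l; split.
- by move=> a /BU; exact: h1.
- by move=> i a /BU; exact: h2.
Qed.

Lemma plot_restrict (R : realType) (Y : Type) (D : diffeology R Y) n
  (U B : set 'rV[R]_n) p : plot D U p -> open B -> B `<=` U -> plot D B p.
Proof.
move=> hp oB BU.
have := plot_comp hp oB (smooth_on_id B) BU.
by move/plot_ext; apply.
Qed.

Lemma restrict_cocone (R : realType) (Y : Type) (D : diffeology R Y) (y : Y)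
  (T : lmodType R) c : tcocone D y (W := T) c ->
  forall n (U B : set 'rV[R]_n) p q, tobj D y U p -> tobj D y B q ->
  B `<=` U -> (forall u, B u -> p u = q u) -> forall v, c n U p v = c n B q v.
Proof.
move=> [_ cc] n U B p q hU hB BU pq v.
have T1 : tmor B q U p id by split => //; exact: smooth_on_id.
have := cc n n B q U p id hB hU T1 v.
by rewrite (@derive_id R 'rV[R]_n).
Qed.

Theorem proposition3p6 (R : realType) (X : Type) (D : diffeology R X) (x : X)
  (A : set X) (hA : D_open D A) (hx : A x)
  (TA : lmodType R)
  (cA : forall n, set 'rV[R]_n -> ('rV[R]_n -> {y : X | A y}) -> 'rV[R]_n -> TA)
  (TX : lmodType R)
  (cX : forall n, set 'rV[R]_n -> ('rV[R]_n -> X) -> 'rV[R]_n -> TX) :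
  is_tangent_space (sub_diffeology D A) (exist A x hx) cA ->
  is_tangent_space D x cX ->
  forall h : TA -> TX, is_linear h ->
    (forall n (U : set 'rV[R]_n) p, tobj (sub_diffeology D A) (exist A x hx) U p ->
       forall v, h (cA n U p v) = cX n U (fun u => proj1_sig (p u)) v) ->
    bijective h.
Proof.
move=> [ccA uA] [ccX uX] h hlin hspec.
pose L (y : X) : {y : X | A y} :=
  match pselect (A y) with left H => exist A y H | right _ => exist A x hx end.
have L_val y : A y -> proj1_sig (L y) = y.
  by move=> Ay; rewrite /L; case: pselect.
have L_proj z : L (proj1_sig z) = z.
  case: z => y Hy; rewrite /L /=; case: pselect => H //.
  by congr exist; exact: Prop_irrelevance.
pose rad n (U : set 'rV[R]_n) (p : 'rV[R]_n -> X) : R :=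
  xget 1 [set r : R | 0 < r /\ ball 0 r `<=` U `&` p @^-1` A].
have rad_spec n (U : set 'rV[R]_n) p : tobj D x U p ->
    0 < rad n U p /\ ball 0 (rad n U p) `<=` U `&` p @^-1` A.
  move=> [oU cU U0 pp p0].
  apply: (@xgetPex _ 1 [set r : R | 0 < r /\ ball 0 r `<=` U `&` p @^-1` A]).
  have : nbhs (0 : 'rV[R]_n) (U `&` p @^-1` A).
    by apply: open_nbhs_nbhs; split; [exact: hA pp | split => //; rewrite /preimage /= p0].
  by move/nbhs_ballP => [r r0 hr]; exists r.
have tobj_sub n (U : set 'rV[R]_n) p r : tobj D x U p -> 0 < r ->
    ball 0 r `<=` U `&` p @^-1` A ->
    tobj (sub_diffeology D A) (exist A x hx) (ball 0 r) (L \o p).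
  move=> [oU cU U0 pp p0] r0 hr; split.
  - exact: ball_open.
  - exact: ball_connected.
  - exact: ballxx.
  - apply: (plot_ext (p := p)); first by apply: plot_restrict pp (ball_open _ _) _ => u /hr [].
    by move=> u /hr [_ Au]; rewrite /= L_val.
  - by rewrite /= p0; exact: (L_proj (exist A x hx)).
have tobj_X n (U : set 'rV[R]_n) q : tobj (sub_diffeology D A) (exist A x hx) U q ->
    tobj D x U (fun u => proj1_sig (q u)).
  by move=> [oU cU U0 pp p0]; split => //; rewrite p0.
pose d n (U : set 'rV[R]_n) (p : 'rV[R]_n -> X) (v : 'rV[R]_n) : TA :=
  cA n (ball 0 (rad n U p)) (L \o p) v.
have dcoc : tcocone D x d.
  split.
    move=> n U p hp; have [r0 hr] := rad_spec n U p hp.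
    exact: (ccA.1 _ _ _ (tobj_sub _ _ _ _ hp r0 hr)).
  move=> n m U p V q f hp hq [sf fUV f0 qf] v.
  have [r0 hr] := rad_spec n U p hp; have [s0 hs] := rad_spec m V q hq.
  have [U0 _] : U 0 /\ True by case: hp.
  have cf : {for 0, continuous f} by have [h1 _] := sf [::]; exact: h1.
  have : nbhs (0 : 'rV[R]_n) (f @^-1` ball 0 (rad m V q)).
    by apply: cf; rewrite f0; exact: nbhsx_ballx.
  move/nbhs_ballP => [r1 r10 hr1].
  set r := rad n U p; set s := rad m V q.
  pose r' := Order.min r r1.
  have r'0 : 0 < r' by rewrite lt_min r0.
  have r'r : ball (0 : 'rV[R]_n) r' `<=` ball 0 r by apply: le_ball; rewrite ge_min lexx.
  have r'r1 : ball (0 : 'rV[R]_n) r' `<=` ball 0 r1 by apply: le_ball; rewrite ge_min lexx orbT.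
  have hr' : ball (0 : 'rV[R]_n) r' `<=` U `&` p @^-1` A by move=> u /r'r /hr.
  have ho1 := tobj_sub _ _ _ _ hp r0 hr.
  have ho2 := tobj_sub _ _ _ _ hp r'0 hr'.
  have ho3 := tobj_sub _ _ _ _ hq s0 hs.
  rewrite /d -/r -/s (restrict_cocone ccA ho1 ho2 r'r) //.
  apply: (ccA.2 _ _ _ _ _ _ f ho2 ho3); split.
  - by apply: smooth_on_sub sf _ => u /hr' [].
  - by move=> u /r'r1 /hr1.
  - exact: f0.
  - by move=> u /hr' [Uu _]; rewrite /= qf.
have [g [[glin gspec] _]] := uX TA d dcoc.
exists g.
- have [k0 [_ kuniq]] := uA TA cA ccA.
  have e1 : k0 = g \o h.
    apply: kuniq; split.
      by move=> a u v; rewrite /= hlin glin.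
    move=> n U q hq v; rewrite /= hspec // gspec; last exact: tobj_X.
    have [r0 hr] := rad_spec n U _ (tobj_X _ _ _ hq).
    have SUB : ball 0 (rad n U (fun u => sval (q u))) `<=` U by move=> u /hr [].
    have EQ : forall u, ball 0 (rad n U (fun u => sval (q u))) u ->
        q u = (L \o (fun u => sval (q u))) u by move=> u _; rewrite /= L_proj.
    by rewrite (restrict_cocone ccA hq (tobj_sub _ _ _ _ (tobj_X _ _ _ hq) r0 hr) SUB EQ v).
  have e2 : k0 = (@id TA) by apply: kuniq; split.
  by move=> t; have := congr1 (fun k => k t) (etrans (esym e1) e2).
- have [k0 [_ kuniq]] := uX TX cX ccX.
  have e1 : k0 = h \o g.
    apply: kuniq; split.
      by move=> a u v; rewrite /= glin hlin.
    move=> n U p hp v; rewrite /= gspec //.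
    have [r0 hr] := rad_spec n U _ hp.
    have ho := tobj_sub _ _ _ _ hp r0 hr.
    unfold d; rewrite hspec //; symmetry.
    have SUB : ball 0 (rad n U p) `<=` U by move=> u /hr [].
    have EQ : forall u, ball 0 (rad n U p) u ->
        p u = (fun u => sval ((L \o p) u)) u by move=> u /hr [_ Au]; rewrite /= L_val.
    by rewrite (restrict_cocone ccX hp (tobj_X _ _ _ ho) SUB EQ v).
  have e2 : k0 = (@id TX) by apply: kuniq; split.
  by move=> t; have := congr1 (fun k => k t) (etrans (esym e1) e2).
Qed.
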